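(* Run UBEV-S (described in the context) on a finite-horizon episodic stationary MDP. Outside of the failure event, for all episodes $k$, timesteps $t\in[H]$ and states $s$, $\tilde V^{\pi_k}_t(s)\ge V^*_t(s)$.
   Context: Setting: a finite-horizon episodic MDP with finite state set $\mathcal S$ ($|\mathcal S|=S$), finite action set $\mathcal A$ ($|\mathcal A|=A$), horizon $H$, stationary transitions $p(s'\mid s,a)$ and mean rewards $r(s,a)\in[0,1]$ (observed rewards in $[0,1]$). $V^*_t$ is the optimal value function at timestep $t$ ($V^*_{H+1}\equiv0$). For a vector $V$, $\mathrm{rng}\,V=\max_sV(s)-\min_sV(s)$. Algorithm UBEV-S (input $\delta\in(0,1]$): maintain, aggregated over all timesteps of all past episodes, counts $n(s,a)$, reward sums $l(s,a)$, transition counts $m(s',s,a)$ (initially $0$), and a scalar $\phi^+$ initialized to $0$ once. At the start of each episode, set $\tilde V_{H+1}\equiv0$ and for $t=H,\dots,1$ and each $s$: for each $a$, $\phi(s,a)=\sqrt{(2\ln\ln(\max\{e,n(s,a)\})+\ln(27HSA/\delta))/n(s,a)}$, $\hat r(s,a)=l(s,a)/n(s,a)$, $\hat p(s,a)=m(\cdot,s,a)/n(s,a)$, $Q(a)=\min\{1,\hat r+\phi\}+\min\{\max_{s'}\tilde V_{t+1}(s'),\hat p(s,a)^\top\tilde V_{t+1}+\min\{H-t,\mathrm{rng}\,\tilde V_{t+1}+\phi^+\}\phi(s,a)\}$; set $\pi_k(s,t)=\arg\max_aQ(a)$, $\tilde V_t(s)=Q(\pi_k(s,t))$, $\phi^+\leftarrow\max\{4\sqrt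 SH^2\phi(s,\pi_k(s,t)),\phi^+\}$. Then execute $\pi_k$ for $H$ steps and update the counts. In episode $k$: $n_k,\hat r_k,\hat p_k,\phi_k$ denote the quantities at the start of the episode, and $\tilde V^{\pi_k}_t$ is the vector $\tilde V_t$ computed in episode $k$. Failure event: let $w_{tk}(s,a)$ be the probability, in episode $k$ under $\pi_k$, of being in $s$ at step $t$ and taking $a$. ''Outside of the failure event'' means that for all episodes $k$, timesteps $t$ and pairs $(s,a)$: $n_k(s,a)\ge\frac12\sum_{i<k}\sum_{t\in[H]}w_{ti}(s,a)-H\ln\frac{9SA}{\delta}$; $|\hat r_k(s,a)-r(s,a)|\le\phi_k(s,a)$; $|(\hat p_k(s,a)-p(\cdot\mid s,a))^\top V^*_{t+1}|\le(\mathrm{rng}\,V^*_{t+1})\phi_k(s,a)$; and $\|\hat p_k(s,a)-p(\cdot\mid s,a)\|_1\le4\sqrt S\,\phi_k(s,a)$. *)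

(* Defs.v *)
From HB Require Import structures.
From mathcomp Require Import all_boot all_order all_algebra.
From mathcomp Require Import all_classical all_reals all_analysis.
Set Implicit Arguments.
Unset Strict Implicit.
Unset Printing Implicit Defensive.
Import Order.TTheory GRing.Theory Num.Theory.
Local Open Scope ring_scope.

(* (correct whenever T is nonempty; 0 on an empty type)                *)
Definition fmax {R : realType} {T : finType} (f : T -> R) : R :=
  match enum T with
  | [::] => 0
  | x :: _ => \big[Num.max/f x]_(y : T) f y
  end.

Definition fmin {R : realType} {T : finType} (f : T -> R) : R :=
  - fmax (fun y => - f y).

Definition rng {R : realType} {T : finType} (f : T -> R) : R := fmax f - fmin f.

(* Optimal value function.  Vstar h s = optimal value with h steps to go; *)
(* p s a s' = p(s' | s, a).                                            *)
Fixpoint Vstar {R : realType} {S A : finType} (p : S -> A -> S -> R)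
    (r : S -> A -> R) (h : nat) (s : S) : R :=
  match h with
  | 0 => 0
  | h'.+1 => fmax (fun a : A => r s a + \sum_(s' : S) p s a s' * Vstar p r h' s')
  end.

Definition Vopt {R : realType} {S A : finType} (p : S -> A -> S -> R)
    (r : S -> A -> R) (H t : nat) : S -> R :=
  Vstar p r (H.+1 - t).

Definition confw {R : realType} (S A : finType) (H : nat) (delta : R) (n : nat) : R :=
  Num.sqrt ((2 * ln (ln (Num.max (expR 1) n%:R))
             + ln (27 * H%:R * #|S|%:R * #|A|%:R / delta)) / n%:R).

(* The scalar phi^+ is an extended nonnegative real: None encodes +oo,
   which is what phi(s,a) is when n(s,a) = 0. *)

(* Q(a) at timestep t, state s, given counts n, reward sums l,
   transition counts m (m s a s' = m(s',s,a)), the vector V~_{t+1} = Vn,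
   and the current phi^+ = php.  When n(s,a) = 0, phi(s,a) = +oo and
   Q(a) = min{1,oo} + min{max V~_{t+1}, oo} = 1 + max V~_{t+1}. *)
Definition Qval {R : realType} {S A : finType} (H : nat) (delta : R)
    (n : S -> A -> nat) (l : S -> A -> R) (m : S -> A -> S -> nat)
    (Vn : S -> R) (php : option R) (t : nat) (s : S) (a : A) : R :=
  if n s a == 0%N then 1 + fmax Vn
  else
    let ph := confw S A H delta (n s a) in
    let rhat := l s a / (n s a)%:R in
    let pV := \sum_(s' : S) ((m s a s')%:R / (n s a)%:R) * Vn s' in
    let c := match php with
             | None => (H - t)%:R
             | Some x => Num.min (H - t)%:R (rng Vn + x)
             end in
    Num.min 1 (rhat + ph) + Num.min (fmax Vn) (pV + c * ph).

Definition phiupd {R : realType} {S A : finType} (H : nat) (delta : R)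
    (n : S -> A -> nat) (php : option R) (s : S) (a : A) : option R :=
  match php with
  | None => None
  | Some x =>
      if n s a == 0%N then None
      else Some (Num.max (4 * Num.sqrt #|S|%:R * (H%:R) ^+ 2
                            * confw S A H delta (n s a)) x)
  end.

(* One timestep t of the planning loop: states processed in the order
   sord; amax t s is the (arbitrary) argmax rule. Returns
   (V~_t, pi_k(.,t), phi^+). *)
Definition plan_step {R : realType} {S A : finType} (H : nat) (delta : R)
    (amax : nat -> S -> (A -> R) -> A) (sord : seq S)
    (n : S -> A -> nat) (l : S -> A -> R) (m : S -> A -> S -> nat)
    (t : nat) (Vn : S -> R) (php0 : option R) :
    (S -> R) * (S -> A) * option R :=
  foldl (fun acc s =>
           let: (V, P, php) := acc in
           let Q := Qval H delta n l m Vn php t s in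
           let a := amax t s Q in
           ((fun s' => if s' == s then Q a else V s'),
            (fun s' => if s' == s then a else P s'),
            phiupd H delta n php s a))
        ((fun _ => 0), (fun s => amax t s (fun _ => 0)), php0) sord.

(* Backward induction over t = H, H-1, ..., H-j+1.
   Returns (t |-> V~_t, (s,t) |-> pi_k(s,t), phi^+). V~_{H+1} = 0. *)
Fixpoint plan_aux {R : realType} {S A : finType} (H : nat) (delta : R)
    (amax : nat -> S -> (A -> R) -> A) (sord : seq S)
    (n : S -> A -> nat) (l : S -> A -> R) (m : S -> A -> S -> nat)
    (php0 : option R) (j : nat) :
    (nat -> S -> R) * (S -> nat -> A) * option R :=
  match j with
  | 0 => ((fun _ _ => 0), (fun s _ => amax 0%N s (fun _ => 0)), php0)
  | j'.+1 =>
      let: (V, P, php) := plan_aux H delta amax sord n l m php0 j' in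
      let t := (H - j')%N in
      let: (Vt, Pt, php') := plan_step H delta amax sord n l m t (V t.+1) php in
      ((fun t' => if t' == t then Vt else V t'),
       (fun s t' => if t' == t then Pt s else P s t'),
       php')
  end.

Definition plan {R : realType} {S A : finType} (H : nat) (delta : R)
    (amax : nat -> S -> (A -> R) -> A) (sord : seq S)
    (n : S -> A -> nat) (l : S -> A -> R) (m : S -> A -> S -> nat)
    (php0 : option R) :=
  plan_aux H delta amax sord n l m php0 H.

(* Sample path: x i t = state of episode i at step t (t = 1..H+1),     *)
(* rw i t = observed reward at step t of episode i, and the action     *)
(* taken is pol i (x i t) t.  Counts at the start of episode k.        *)
Definition n_of {S A : finType} (H : nat) (x : nat -> nat -> S)
    (pol : nat -> S -> nat -> A) (k : nat) (s : S) (a : A) : nat :=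
  \sum_(i < k) \sum_(1 <= t < H.+1) ((x i t == s) && (pol i (x i t) t == a)).

Definition l_of {R : realType} {S A : finType} (H : nat) (x : nat -> nat -> S)
    (rw : nat -> nat -> R) (pol : nat -> S -> nat -> A) (k : nat) (s : S) (a : A) : R :=
  \sum_(i < k) \sum_(1 <= t < H.+1)
     (if (x i t == s) && (pol i (x i t) t == a) then rw i t else 0).

Definition m_of {S A : finType} (H : nat) (x : nat -> nat -> S)
    (pol : nat -> S -> nat -> A) (k : nat) (s : S) (a : A) (s' : S) : nat :=
  \sum_(i < k) \sum_(1 <= t < H.+1)
     [&& x i t == s, pol i (x i t) t == a & x i t.+1 == s'].

Definition plan_k {R : realType} {S A : finType} (H : nat) (delta : R)
    (amax : nat -> nat -> S -> (A -> R) -> A) (sord : seq S)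
    (x : nat -> nat -> S) (rw : nat -> nat -> R)
    (pol : nat -> S -> nat -> A) (php : nat -> option R) (k : nat) :=
  plan H delta (amax k) sord (n_of H x pol k) (l_of H x rw pol k)
       (m_of H x pol k) (php k).

(* pol, php form the run of UBEV-S along the sample path (x, rw):
   php k = phi^+ at the start of episode k, initialised to 0 once. *)
Definition ubevs_run {R : realType} {S A : finType} (H : nat) (delta : R)
    (amax : nat -> nat -> S -> (A -> R) -> A) (sord : seq S)
    (x : nat -> nat -> S) (rw : nat -> nat -> R)
    (pol : nat -> S -> nat -> A) (php : nat -> option R) : Prop :=
  php 0%N = Some 0 /\
  forall k, pol k = (plan_k H delta amax sord x rw pol php k).1.2 /\
            php k.+1 = (plan_k H delta amax sord x rw pol php k).2.

Definition Vtil {R : realType} {S A : finType} (H : nat) (delta : R)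
    (amax : nat -> nat -> S -> (A -> R) -> A) (sord : seq S)
    (x : nat -> nat -> S) (rw : nat -> nat -> R)
    (pol : nat -> S -> nat -> A) (php : nat -> option R) (k t : nat) : S -> R :=
  (plan_k H delta amax sord x rw pol php k).1.1 t.

(* Occupancy: sdist p0 p pi t = distribution of the state at step t+1  *)
(* under policy pi started from initial distribution p0;               *)
(* w pi t (s,a) = P(s_t = s, a_t = a).                                 *)
Fixpoint sdist {R : realType} {S A : finType} (p0 : S -> R)
    (p : S -> A -> S -> R) (pi : S -> nat -> A) (t : nat) : S -> R :=
  match t with
  | 0 => p0
  | t'.+1 => fun s' => \sum_(s : S) sdist p0 p pi t' s * p s (pi s t'.+1) s'
  end.

Definition wocc {R : realType} {S A : finType} (p0 : S -> R)
    (p : S -> A -> S -> R) (pi : S -> nat -> A) (t : nat) (s : S) (a : A) : R :=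
  sdist p0 p pi t.-1 s * (pi s t == a)%:R.

(* "Outside of the failure event".  When n_k(s,a) = 0, phi_k(s,a) = +oo *)
(* and the three concentration conditions hold trivially.              *)
Definition no_failure {R : realType} {S A : finType} (H : nat) (delta : R)
    (p0 : S -> R) (p : S -> A -> S -> R) (r : S -> A -> R)
    (x : nat -> nat -> S) (rw : nat -> nat -> R)
    (pol : nat -> S -> nat -> A) : Prop :=
  forall (k : nat) (s : S) (a : A),
    let n := n_of H x pol k s a in
    let ph := confw S A H delta n in
    let rhat := l_of H x rw pol k s a / n%:R in
    let phat := fun s' => (m_of H x pol k s a s')%:R / n%:R in
    [/\ n%:R >= 2^-1 * (\sum_(i < k) \sum_(1 <= t < H.+1) wocc p0 p (pol i) t s a)
                - H%:R * ln (9 * #|S|%:R * #|A|%:R / delta),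
        (0 < n)%N -> `|rhat - r s a| <= ph,
        (0 < n)%N -> forall t, (1 <= t <= H)%N ->
           `|\sum_(s' : S) (phat s' - p s a s') * Vopt p r H t.+1 s'|
             <= rng (Vopt p r H t.+1) * ph
      & (0 < n)%N -> \sum_(s' : S) `|phat s' - p s a s'| <= 4 * Num.sqrt #|S|%:R * ph].

(* Main.v *)
Require Import Defs.
From HB Require Import structures.
From mathcomp Require Import all_boot all_order all_algebra.
From mathcomp Require Import all_classical all_reals all_analysis.
From mathcomp Require Import ring lra zify.
Import Order.TTheory GRing.Theory Num.Theory.
Local Open Scope ring_scope.
Lemma bigmax_seq_ge (R : realType) (I : eqType) (l : seq I) (idx : R) (F : I -> R) :
  (forall y, y \in l -> F y <= \big[Num.max/idx]_(i <- l) F i) /\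
  idx <= \big[Num.max/idx]_(i <- l) F i.
Proof.
elim: l => [|a l [IH1 IH2]]; first by rewrite big_nil.
rewrite big_cons /=; split; last by rewrite le_max IH2 orbT.
move=> y; rewrite inE => /orP [/eqP ->|Hy]; first by rewrite le_max lexx.
by rewrite le_max IH1 ?orbT.
Qed.

Lemma bigmax_seq_le (R : realType) (I : Type) (l : seq I) (idx c : R) (F : I -> R) :
  (forall y, F y <= c) -> idx <= c -> \big[Num.max/idx]_(i <- l) F i <= c.
Proof.
move=> H1 H2; elim: l => [|a l IH]; first by rewrite big_nil.
by rewrite big_cons ge_max H1 IH.
Qed.

Lemma bigmax_seq_ex (R : realType) (I : Type) (l : seq I) (idx : R) (F : I -> R) :
  \big[Num.max/idx]_(i <- l) F i = idx \/ exists y, \big[Num.max/idx]_(i <- l) F i = F y.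
Proof.
elim: l => [|a l IH]; first by rewrite big_nil; left.
rewrite big_cons; case: (leP (F a) (\big[Num.max/idx]_(i <- l) F i)) => h.
  exact: IH.
by right; exists a.
Qed.

Lemma fmax_ge (R : realType) (T : finType) (f : T -> R) y : f y <= fmax f.
Proof.
rewrite /fmax; case E: (enum T) => [|x0 rest].
  by have := mem_enum T y; rewrite E in_nil inE.
have [H1 _] := @bigmax_seq_ge R T (index_enum T) (f x0) f.
apply: H1; exact: mem_index_enum.
Qed.

Lemma fmax_le (R : realType) (T : finType) (f : T -> R) (c : R) (y0 : T) :
  (forall y, f y <= c) -> fmax f <= c.
Proof.
move=> Hf; rewrite /fmax; case E: (enum T) => [|x0 rest].
  by have := mem_enum T y0; rewrite E in_nil inE.
exact: bigmax_seq_le.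
Qed.

Lemma fmax_ex (R : realType) (T : finType) (f : T -> R) (y0 : T) :
  exists y, fmax f = f y.
Proof.
rewrite /fmax; case E: (enum T) => [|x0 rest].
  by have := mem_enum T y0; rewrite E in_nil inE.
case: (@bigmax_seq_ex R T (index_enum T) (f x0) f) => [->|//]; by exists x0.
Qed.

Lemma fmax_ge0 (R : realType) (T : finType) (f : T -> R) :
  (forall y, 0 <= f y) -> 0 <= fmax f.
Proof.
move=> Hf; rewrite /fmax; case E: (enum T) => [|x0 rest] //.
apply: le_trans (Hf x0) _; have [_ ->] := @bigmax_seq_ge R T (index_enum T) (f x0) f; done.
Qed.

Lemma fmin_le (R : realType) (T : finType) (f : T -> R) y : fmin f <= f y.
Proof. by rewrite /fmin lerNl (@fmax_ge R T (fun y => - f y)). Qed.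

Lemma fmin_ex (R : realType) (T : finType) (f : T -> R) (y0 : T) :
  exists y, fmin f = f y.
Proof.
have [y Hy] := @fmax_ex R T (fun y => - f y) y0; exists y; by rewrite /fmin Hy opprK.
Qed.

Lemma fmin_ge0 (R : realType) (T : finType) (f : T -> R) :
  (forall y, 0 <= f y) -> 0 <= fmin f.
Proof.
move=> Hf; rewrite /fmin oppr_ge0 /fmax; case E: (enum T) => [|x0 rest] //.
apply: bigmax_seq_le => [y|]; by rewrite oppr_le0.
Qed.

Lemma sum_p_le_fmax (R : realType) (T : finType) (q g : T -> R) :
  (forall y, 0 <= q y) -> \sum_y q y = 1 -> \sum_y q y * g y <= fmax g.
Proof.
move=> Hq Hs; apply: le_trans (_ : \sum_y q y * fmax g <= _).
  apply: ler_sum => y _; apply: ler_wpM2l => //; exact: fmax_ge.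
by rewrite -big_distrl /= Hs mul1r.
Qed.
Lemma Vstar_bnd (R : realType) (S A : finType) (p : S -> A -> S -> R) (r : S -> A -> R)
    (hp : forall s a s', 0 <= p s a s') (hp1 : forall s a, \sum_(s' : S) p s a s' = 1)
    (hr : forall s a, 0 <= r s a <= 1) (a0 : A) h :
  forall s, 0 <= Vstar p r h s <= h%:R.
Proof.
elim: h => [|h IH] s /=; first by rewrite lexx.
apply/andP; split.
  apply: fmax_ge0 => a; apply: addr_ge0; first by have /andP[] := hr s a.
  apply: sumr_ge0 => s' _; apply: mulr_ge0 => //; by case/andP: (IH s').
apply: (@fmax_le _ _ _ _ a0) => a. rewrite -natr1 [_ + 1]addrC; apply: lerD; first by have /andP[] := hr s a.
apply: le_trans (@sum_p_le_fmax _ _ _ _ (hp s a) (hp1 s a)) _.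
apply: (@fmax_le _ _ _ _ s) => s'; by case/andP: (IH s').
Qed.
Lemma arith (R : realType) (ph q j w x' : R): 0 <= ph -> 4 <= q -> 0 <= j -> q * ph <= x' * w -> ph * (2 + j + q * j) + x' * (j^+2 * w) <= x' * ((j+1)^+2 * w).
Proof.
move=> h1 h2 h3 h4.
have h5 : 0 <= ph * ((q - 1) * j + (q - 2)).
  apply: mulr_ge0 => //; apply: addr_ge0; last lra. apply: mulr_ge0 => //; lra.
have h6 : (q * ph) * (2 * j + 1) <= (x' * w) * (2 * j + 1).
  apply: ler_wpM2r => //; lra.
have -> : x' * ((j + 1) ^+ 2 * w) = x' * (j ^+ 2 * w) + (x' * w) * (2 * j + 1) by ring.
have : ph * (2 + j + q * j) <= (q * ph) * (2 * j + 1).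
  rewrite -subr_ge0; apply: le_trans h5 _; rewrite le_eqVlt; apply/orP; left; apply/eqP; ring.
lra.
Qed.

Definition ge_opt (R : realType) (o1 o2 : option R) : Prop :=
  match o1, o2 with
  | None, _ => True
  | Some a, Some b => b <= a
  | Some _, None => False
  end.
Arguments ge_opt {R}.

Lemma ge_opt_trans (R : realType) (a b c : option R) :
  ge_opt a b -> ge_opt b c -> ge_opt a c.
Proof. case: a => [a|] //; case: b => [b|] //; case: c => [c|] //= h1 h2; exact: le_trans h2 h1. Qed.
Arguments ge_opt_trans {R a b c}.

Lemma ge_opt_refl (R : realType) (a : option R) : ge_opt a a.
Proof. by case: a => [a|] //=. Qed.

Arguments ge_opt_refl {R}.

Lemma phiupd_ge (R : realType) (S A : finType) H (delta : R) n ph s a :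
  ge_opt (@phiupd R S A H delta n ph s a) ph.
Proof.
case: ph => [x|] //=; case: eqP => //= _; by rewrite le_max lexx orbT.
Qed.
Arguments phiupd_ge {R S A}.

Definition coef (R : realType) (H t : nat) : R :=
  ((H.+1 - t)%N%:R) ^+ 2 / (H%:R) ^+ 2.
Arguments coef {R}.

Lemma Vopt_step (R : realType) (S A : finType) (p : S -> A -> S -> R) (r : S -> A -> R) H t s :
  (t <= H)%N ->
  Vopt p r H t s = fmax (fun a => r s a + \sum_s' p s a s' * Vopt p r H t.+1 s').
Proof. by move=> ht; rewrite /Vopt subSS subSn. Qed.

Lemma step_state (R : realType) (S A : finType) (H : nat) (delta : R)
  (p : S -> A -> S -> R) (r : S -> A -> R)
  (hp : forall s a s', 0 <= p s a s') (hp1 : forall s a, \sum_(s' : S) p s a s' = 1)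
  (hr : forall s a, 0 <= r s a <= 1)
  (n : S -> A -> nat) (l : S -> A -> R) (m : S -> A -> S -> nat)
  (hfr : forall s a, (0 < n s a)%N -> `|l s a / (n s a)%:R - r s a| <= confw S A H delta (n s a))
  (hfp : forall s a, (0 < n s a)%N -> forall t, (1 <= t <= H)%N ->
      `|\sum_(s' : S) ((m s a s')%:R / (n s a)%:R - p s a s') * Vopt p r H t.+1 s'|
        <= rng (Vopt p r H t.+1) * confw S A H delta (n s a))
  (hf1 : forall s a, (0 < n s a)%N -> \sum_(s' : S) `|(m s a s')%:R / (n s a)%:R - p s a s'|
        <= 4 * Num.sqrt #|S|%:R * confw S A H delta (n s a))
  (t : nat) (ht : (1 <= t <= H)%N) (Vn : S -> R) (php_in ph : option R)
  (hVn : forall s, Vopt p r H t.+1 s <= Vn s <= (H - t)%:R)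
  (hD : forall x0, php_in = Some x0 ->
     0 <= x0 /\ forall s, Vn s - Vopt p r H t.+1 s <= x0 * coef H t.+1)
  (hph : ge_opt ph php_in)
  (am : (A -> R) -> A) (ham : forall Q b, Q b <= Q (am Q)) (s : S) :
  let Q := Qval H delta n l m Vn ph t s in
  let a := am Q in
  [/\ Vopt p r H t s <= Q a, Q a <= (H.+1 - t)%:R &
      forall x', phiupd H delta n ph s a = Some x' -> Q a - Vopt p r H t s <= x' * coef H t].
Proof.
move=> Q a.
have /andP [ht1 htH] := ht.
have a0 : A := a.
set V1 := Vopt p r H t.+1.
have V1bnd : forall y, 0 <= V1 y <= (H - t)%:R.
  move=> y; rewrite /V1 /Vopt subSS; exact: Vstar_bnd.
have V1n : forall y, V1 y <= Vn y by move=> y; case/andP: (hVn y).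
have Vnu : forall y, Vn y <= (H - t)%:R by move=> y; case/andP: (hVn y).
have V1ge0 : forall y, 0 <= V1 y by move=> y; case/andP: (V1bnd y).
have mxV1 : fmax V1 <= fmax Vn.
  apply: (@fmax_le _ _ _ _ s) => y; apply: le_trans (V1n y) _; exact: fmax_ge.
have mxVn : fmax Vn <= (H - t)%:R by apply: (@fmax_le _ _ _ _ s).
have pV1 : forall b, \sum_s' p s b s' * V1 s' <= fmax Vn.
  move=> b; apply: le_trans mxV1; exact: sum_p_le_fmax.
have Hpos : (0 < H)%N by apply: leq_trans htH.
have HR : (0 : R) < H%:R by rewrite ltr0n.
have ph0 : forall k, 0 <= confw S A H delta k by move=> k; exact: sqrtr_ge0.
have Qub : Q a <= 1 + fmax Vn.
  rewrite /Q /Qval; case: eqP => _ //.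
  by apply: lerD; rewrite ge_min lexx ?orbT.
split.
-
  rewrite Vopt_step //; have [b ->] := @fmax_ex _ _ (fun a => r s a + \sum_s' p s a s' * V1 s') a0.
  apply: le_trans (ham Q b); rewrite /Q /Qval; case: eqP => hn.
    apply: lerD; first by have /andP[] := hr s b.
    exact: pV1.
  have hn' : (0 < n s b)%N by rewrite lt0n; apply/eqP.
  set c := match ph with None => _ | Some _ => _ end.
  set phi := confw S A H delta (n s b).
  have rngV1 : rng V1 <= (H - t)%:R.
    rewrite /rng; have := @fmin_ge0 _ _ V1 V1ge0.
    have := @fmax_le _ _ V1 (H - t)%:R s (fun y => proj2 (andP (V1bnd y))); lra.
  have coef1 : coef H t.+1 <= 1 :> R.
    rewrite /coef subSS ler_pdivrMr ?exprn_gt0 // mul1r !expr2.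
    have hle : ((H - t)%N%:R : R) <= H%:R by rewrite ler_nat leq_subr.
    by apply: ler_pM.
  have hc : rng V1 <= c.
    rewrite /c; clear c; case: ph hph Q a Qub => [x|] hph Q a Qub //.
    rewrite le_min rngV1 /=.
    case: php_in hD hph => [x0|] hD //= hx0.
    have [x0ge hDs] := hD x0 erefl.
    have [s0 hs0] := @fmin_ex _ _ V1 s.
    have := hDs s0; have := @fmin_le _ _ Vn s0.
    have := @ler_piMr _ (coef H t.+1) x0 x0ge coef1.
    rewrite /rng -/V1 hs0 => h1 h2 h3. have h3' : Vn s0 - V1 s0 <= x0 * coef H t.+1 := h3. have h1' : x0 * coef H t.+1 <= x0 := h1. have hx0' : x0 <= x := hx0. have mx' : fmax V1 <= fmax Vn := mxV1. lra.
  apply: lerD.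
    rewrite le_min; apply/andP; split; first by have/andP[] := hr s b.
    have := hfr s b hn'; rewrite -/phi ler_norml => /andP[h1 h2]; lra.
  rewrite le_min pV1 /=.
  have e1 : \sum_s' (m s b s')%:R / (n s b)%:R * V1 s' <= \sum_s' (m s b s')%:R / (n s b)%:R * Vn s'.
    apply: ler_sum => y _; apply: ler_wpM2l; last exact: V1n.
    by apply: divr_ge0; apply: ler0n.
  have := hfp s b hn' t ht; rewrite -/V1 -/phi ler_norml => /andP[e2 _].
  have e3 : \sum_s' ((m s b s')%:R / (n s b)%:R - p s b s') * V1 s' =
      \sum_s' (m s b s')%:R / (n s b)%:R * V1 s' - \sum_s' p s b s' * V1 s'.
    by rewrite -sumrB; apply: eq_bigr => y _; rewrite mulrBl.
  have e4 : rng V1 * phi <= c * phi by apply: ler_wpM2r; [exact: ph0 | exact: hc].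
  rewrite e3 in e2; lra.
- apply: le_trans Qub _; rewrite subSn // -natr1.
  have mx' : fmax Vn <= (H - t)%:R := mxVn. lra.
- move=> x'; rewrite /phiupd.
  case E: ph => [x|] //.
  case: eqP => // hn [<-].
  have hn0 : (n s a == 0%N) = false by apply/eqP.
  have hn' : (0 < n s a)%N by rewrite lt0n hn0.
  rewrite /Q /Qval hn0 E.
  move: hph; rewrite E; case: php_in hD => [x0|] hD //= hx0.
  have [x0ge hDs] := hD x0 erefl.
  set phi := confw S A H delta (n s a).
  set c := Num.min (H - t)%N%:R _.
  set j : R := (H - t)%N%:R.
  have j0 : 0 <= j by rewrite /j ler0n.
  have hcj : c <= j by rewrite /c ge_min lexx.
  have q1 : Num.min 1 (l s a / (n s a)%:R + phi) <= l s a / (n s a)%:R + phi by rewrite ge_min lexx orbT.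
  have q2 : Num.min (fmax Vn) (\sum_s' (m s a s')%:R / (n s a)%:R * Vn s' + c * phi)
      <= \sum_s' (m s a s')%:R / (n s a)%:R * Vn s' + j * phi.
    rewrite ge_min; apply/orP; right; apply: lerD => //; apply: ler_wpM2r => //; exact: ph0.
  have q3 : r s a + \sum_s' p s a s' * V1 s' <= Vopt p r H t s.
    rewrite Vopt_step //; exact: (@fmax_ge _ _ (fun a => r s a + \sum_s' p s a s' * V1 s')).
  have q4 : l s a / (n s a)%:R - r s a <= phi.
    have := hfr s a hn'; rewrite -/phi ler_norml => /andP[_ ->] //.
  have q5 : \sum_s' ((m s a s')%:R / (n s a)%:R - p s a s') * Vn s' <= 4 * Num.sqrt #|S|%:R * phi * j.
    apply: le_trans (_ : \sum_s' `|(m s a s')%:R / (n s a)%:R - p s a s'| * j <= _).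
      apply: ler_sum => y _; apply: le_trans (ler_norm _) _; rewrite normrM.
      apply: ler_wpM2l => //; rewrite ger0_norm ?Vnu //; exact: le_trans (V1ge0 y) (V1n y).
    rewrite -big_distrl /=; apply: ler_wpM2r => //; exact: hf1.
  have q6 : \sum_s' p s a s' * (Vn s' - V1 s') <= x0 * coef H t.+1.
    apply: le_trans (_ : \sum_s' p s a s' * (x0 * coef H t.+1) <= _).
      apply: ler_sum => y _; apply: ler_wpM2l => //; exact: hDs.
    by rewrite -big_distrl /= hp1 mul1r.
  have q7 : \sum_s' (m s a s')%:R / (n s a)%:R * Vn s' - \sum_s' p s a s' * V1 s' =
     \sum_s' ((m s a s')%:R / (n s a)%:R - p s a s') * Vn s' + \sum_s' p s a s' * (Vn s' - V1 s').
    rewrite -big_split /= -sumrB; apply: eq_bigr => y _; ring.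
  set w : R := ((H%:R) ^+ 2)^-1.
  have w0 : 0 < w by rewrite /w invr_gt0 exprn_gt0.
  have ce1 : coef H t.+1 = j ^+ 2 * w by rewrite /coef subSS.
  have ce2 : coef H t = (j + 1) ^+ 2 * w by rewrite /coef subSn // -natr1.
  set q : R := 4 * Num.sqrt #|S|%:R.
  have q4le : 4 <= q.
    rewrite /q -[X in X <= _]mulr1 ler_wpM2l // -{1}sqrtr1 ler_sqrt ?ler0n // ler1n.
    by apply/card_gt0P; exists s.
  set xm := Num.max _ x.
  have hxm1 : x <= xm by rewrite le_max lexx orbT.
  have hxm2 : q * phi <= xm * w.
    have : q * H%:R ^+ 2 * phi <= xm by rewrite le_max lexx.
    move=> hh; have := ler_wpM2r (ltW w0) hh.
    have -> : q * H%:R ^+ 2 * phi * w = q * phi by rewrite /w; field; rewrite gt_eqF.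
    done.
  have hc2 : x0 * coef H t.+1 <= xm * coef H t.+1.
    apply: ler_wpM2r; last exact: le_trans hx0 hxm1.
    by rewrite ce1; apply: mulr_ge0; [apply: exprn_ge0 | apply: ltW].
  have ar := @arith R phi q j w xm (ph0 _) q4le j0 hxm2.
  rewrite ce2; rewrite ce1 in hc2 q6.
  have hq5 : \sum_s' ((m s a s')%:R / (n s a)%:R - p s a s') * Vn s' <= q * phi * j := q5.
  lra.
Qed.

Lemma foldl_inv (T X : Type) (f : X -> T -> X) (Inv : seq T -> X -> Prop) :
  (forall D acc s, Inv D acc -> Inv (rcons D s) (f acc s)) ->
  forall L D acc, Inv D acc -> Inv (D ++ L) (foldl f acc L).
Proof.
move=> hs; elim => [|s L IH] D acc h /=; first by rewrite cats0.
rewrite -cat_rcons; apply: IH; exact: hs.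
Qed.

Lemma coef_ge0 (R : realType) H t : 0 <= coef H t :> R.
Proof. by rewrite /coef; apply: mulr_ge0; [apply: exprn_ge0 | rewrite invr_ge0 exprn_ge0]. Qed.

Lemma plan_step_inv (R : realType) (S A : finType) (H : nat) (delta : R)
  (p : S -> A -> S -> R) (r : S -> A -> R)
  (hp : forall s a s', 0 <= p s a s') (hp1 : forall s a, \sum_(s' : S) p s a s' = 1)
  (hr : forall s a, 0 <= r s a <= 1)
  (n : S -> A -> nat) (l : S -> A -> R) (m : S -> A -> S -> nat)
  (hfr : forall s a, (0 < n s a)%N -> `|l s a / (n s a)%:R - r s a| <= confw S A H delta (n s a))
  (hfp : forall s a, (0 < n s a)%N -> forall t, (1 <= t <= H)%N ->
      `|\sum_(s' : S) ((m s a s')%:R / (n s a)%:R - p s a s') * Vopt p r H t.+1 s'|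
        <= rng (Vopt p r H t.+1) * confw S A H delta (n s a))
  (hf1 : forall s a, (0 < n s a)%N -> \sum_(s' : S) `|(m s a s')%:R / (n s a)%:R - p s a s'|
        <= 4 * Num.sqrt #|S|%:R * confw S A H delta (n s a))
  (t : nat) (ht : (1 <= t <= H)%N) (Vn : S -> R) (php_in : option R)
  (hVn : forall s, Vopt p r H t.+1 s <= Vn s <= (H - t)%:R)
  (hD : forall x0, php_in = Some x0 ->
     0 <= x0 /\ forall s, Vn s - Vopt p r H t.+1 s <= x0 * coef H t.+1)
  (am : nat -> S -> (A -> R) -> A) (ham : forall t s Q b, Q b <= Q (am t s Q))
  (sord : seq S) (hsord : forall s, s \in sord) :
  forall V P ph, plan_step H delta am sord n l m t Vn php_in = (V, P, ph) ->
  ge_opt ph php_in /\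
  forall s, (Vopt p r H t s <= V s <= (H.+1 - t)%:R) /\
     (forall x, ph = Some x -> V s - Vopt p r H t s <= x * coef H t).
Proof.
pose Inv (D : seq S) (acc : (S -> R) * (S -> A) * option R) :=
  ge_opt acc.2 php_in /\ forall s, s \in D ->
   (Vopt p r H t s <= acc.1.1 s <= (H.+1 - t)%:R) /\
     (forall x, acc.2 = Some x -> acc.1.1 s - Vopt p r H t s <= x * coef H t).
move=> V P ph; rewrite /plan_step.
match goal with |- foldl ?f ?i ?L = _ -> _ => have := @foldl_inv _ _ f Inv _ L [::] i end.
move=> key E.
have [hph hall] : Inv ([::] ++ sord) (V, P, ph).
  rewrite -E; apply: key; last first.
    split; [exact: ge_opt_refl | by []].
  move=> D [[V0 P0] ph0] s [hph0 hD0] /=.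
  have [st1 st2 st3] := @step_state R S A H delta p r hp hp1 hr n l m hfr hfp hf1 t ht Vn php_in ph0
    hVn hD hph0 (am t s) (ham t s) s.
  split; first exact: ge_opt_trans (phiupd_ge _ _ _ _ _ _) hph0.
  move=> s'; rewrite mem_rcons inE; case: eqP => [-> _|/eqP/negbTE ne /= hin].
    rewrite /= eqxx; split; first by apply/andP; split.
    exact: st3.
  rewrite ne; have [hb hx] := hD0 s' hin; split => // x hx'.
  have := phiupd_ge H delta n ph0 s (am t s (Qval H delta n l m Vn ph0 t s)).
  rewrite hx'; clear st1 st2 st3 hD0 hx' hb; case: ph0 hph0 hx => [x0|] //= _ hx hxx.
  apply: le_trans (hx x0 erefl) _; apply: ler_wpM2r => //; exact: coef_ge0.
split => // s; exact: hall s (hsord s).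
Qed.

Lemma plan_aux_inv (R : realType) (S A : finType) (H : nat) (delta : R)
  (p : S -> A -> S -> R) (r : S -> A -> R)
  (hp : forall s a s', 0 <= p s a s') (hp1 : forall s a, \sum_(s' : S) p s a s' = 1)
  (hr : forall s a, 0 <= r s a <= 1)
  (n : S -> A -> nat) (l : S -> A -> R) (m : S -> A -> S -> nat)
  (hfr : forall s a, (0 < n s a)%N -> `|l s a / (n s a)%:R - r s a| <= confw S A H delta (n s a))
  (hfp : forall s a, (0 < n s a)%N -> forall t, (1 <= t <= H)%N ->
      `|\sum_(s' : S) ((m s a s')%:R / (n s a)%:R - p s a s') * Vopt p r H t.+1 s'|
        <= rng (Vopt p r H t.+1) * confw S A H delta (n s a))
  (hf1 : forall s a, (0 < n s a)%N -> \sum_(s' : S) `|(m s a s')%:R / (n s a)%:R - p s a s'|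
        <= 4 * Num.sqrt #|S|%:R * confw S A H delta (n s a))
  (php0 : option R) (hphp0 : ge_opt php0 (Some 0))
  (am : nat -> S -> (A -> R) -> A) (ham : forall t s Q b, Q b <= Q (am t s Q))
  (sord : seq S) (hsord : forall s, s \in sord) :
  forall j, (j <= H)%N -> forall V P ph,
  plan_aux H delta am sord n l m php0 j = (V, P, ph) ->
  ge_opt ph php0 /\
  forall tau, (H - j < tau)%N -> (tau <= H.+1)%N -> forall s,
    (Vopt p r H tau s <= V tau s <= (H.+1 - tau)%:R) /\
    (forall x, ph = Some x -> V tau s - Vopt p r H tau s <= x * coef H tau).
Proof.
elim => [|j IH] hj V P ph /=.
  case=> <- _ <-; split; first exact: ge_opt_refl.
  move=> tau h1 h2 s.
  have -> : tau = H.+1 by rewrite subn0 in h1; lia.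
  rewrite /Vopt /coef subnn /= lexx; split => // x _.
  by rewrite expr0n /= mul0r mulr0 subrr.
case E1: (plan_aux H delta am sord n l m php0 j) => [[V0 P0] ph0].
have [hph0 hV0] := IH (ltnW hj) V0 P0 ph0 E1.
set t := (H - j)%N.
have ht : (1 <= t <= H)%N by rewrite /t; apply/andP; split; [rewrite subn_gt0 | rewrite leq_subr].
have hle : (t.+1 <= H.+1)%N by rewrite ltnS; case/andP: ht.
case E2: (plan_step H delta am sord n l m t (V0 t.+1) ph0) => [[Vt Pt] ph2].
case=> <- _ <-.
have hVn : forall s, Vopt p r H t.+1 s <= V0 t.+1 s <= (H - t)%:R.
  move=> s; have [h _] := hV0 t.+1 (ltnSn _) hle s.
  by rewrite subSS in h.
have hD : forall x0, ph0 = Some x0 ->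
     0 <= x0 /\ forall s, V0 t.+1 s - Vopt p r H t.+1 s <= x0 * coef H t.+1.
  move=> x0 e; split.
    have := ge_opt_trans hph0 hphp0; by rewrite e.
  move=> s; have [_ h] := hV0 t.+1 (ltnSn _) hle s.
  exact: h.
have [hph2 hVt] := @plan_step_inv R S A H delta p r hp hp1 hr n l m hfr hfp hf1 t ht
  (V0 t.+1) ph0 hVn hD am ham sord hsord Vt Pt ph2 E2.
split; first exact: ge_opt_trans hph2 hph0.
move=> tau h1 h2 s; case: eqP => [->|ne]; first exact: hVt.
have h1' : (H - j < tau)%N.
  move: ne h1 hj; rewrite /t; lia.
have [hb hx] := hV0 tau h1' h2 s; split => // x ex.
move: hph2; rewrite ex; clear E1 E2 hD hVn hV0 hVt; case: ph0 hph0 hx => [x0|] //= _ hx hxx.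
apply: le_trans (hx x0 erefl) _; apply: ler_wpM2r => //; exact: coef_ge0.
Qed.

Theorem lemma6 (R : realType) (S A : finType) (H : nat) (delta : R)
    (p0 : S -> R) (p : S -> A -> S -> R) (r : S -> A -> R)
    (hp0 : forall s, 0 <= p0 s) (hp01 : \sum_(s : S) p0 s = 1)
    (hp : forall s a s', 0 <= p s a s') (hp1 : forall s a, \sum_(s' : S) p s a s' = 1)
    (hr : forall s a, 0 <= r s a <= 1)
    (hdelta : 0 < delta <= 1)
    (amax : nat -> nat -> S -> (A -> R) -> A)
    (hamax : forall k t s (Q : A -> R) (a : A), Q a <= Q (amax k t s Q))
    (sord : seq S) (hsord : perm_eq sord (enum S))
    (x : nat -> nat -> S) (rw : nat -> nat -> R)
    (hrw : forall i t, 0 <= rw i t <= 1)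
    (pol : nat -> S -> nat -> A) (php : nat -> option R)
    (hrun : ubevs_run H delta amax sord x rw pol php)
    (hgood : no_failure H delta p0 p r x rw pol) :
  forall (k t : nat) (s : S), (1 <= t <= H)%N ->
    Vopt p r H t s <= Vtil H delta amax sord x rw pol php k t s.
Proof.
move=> k t s ht.
have hsord' : forall s, s \in sord by move=> s'; rewrite (perm_mem hsord) mem_enum.
have key : forall k, ge_opt (php k) (Some 0) -> forall V P ph,
    plan_k H delta amax sord x rw pol php k = (V, P, ph) ->
    ge_opt ph (php k) /\
    forall tau, (0 < tau)%N -> (tau <= H.+1)%N -> forall s,
      (Vopt p r H tau s <= V tau s <= (H.+1 - tau)%:R).
  move=> k0 hk V P ph E.
  have hfr : forall s a, (0 < n_of H x pol k0 s a)%N ->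
     `|l_of H x rw pol k0 s a / (n_of H x pol k0 s a)%:R - r s a|
        <= confw S A H delta (n_of H x pol k0 s a).
    move=> s' a' hn; have [_ h _ _] := hgood k0 s' a'; exact: h hn.
  have hfp : forall s a, (0 < n_of H x pol k0 s a)%N -> forall t, (1 <= t <= H)%N ->
      `|\sum_(s' : S) ((m_of H x pol k0 s a s')%:R / (n_of H x pol k0 s a)%:R - p s a s')
          * Vopt p r H t.+1 s'|
        <= rng (Vopt p r H t.+1) * confw S A H delta (n_of H x pol k0 s a).
    move=> s' a' hn; have [_ _ h _] := hgood k0 s' a'; exact: h hn.
  have hf1 : forall s a, (0 < n_of H x pol k0 s a)%N ->
      \sum_(s' : S) `|(m_of H x pol k0 s a s')%:R / (n_of H x pol k0 s a)%:R - p s a s'|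
        <= 4 * Num.sqrt #|S|%:R * confw S A H delta (n_of H x pol k0 s a).
    move=> s' a' hn; have [_ _ _ h] := hgood k0 s' a'; exact: h hn.
  have := @plan_aux_inv R S A H delta p r hp hp1 hr (n_of H x pol k0) (l_of H x rw pol k0)
    (m_of H x pol k0) hfr hfp hf1 (php k0) hk (amax k0) (hamax k0) sord hsord' H (leqnn H)
    V P ph E.
  rewrite subnn => -[h1 h2]; split => // tau ht1 ht2 s'; exact: (h2 tau ht1 ht2 s').1.
have hphk : forall k, ge_opt (php k) (Some 0).
  elim=> [|k0 IHk]; first by rewrite hrun.1 /=.
  have [_ hk] := hrun; have [_ ->] := hk k0.
  case E: (plan_k H delta amax sord x rw pol php k0) => [[V P] ph].
  have [h _] := key k0 IHk V P ph E; exact: ge_opt_trans h IHk.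
rewrite /Vtil; case E: (plan_k H delta amax sord x rw pol php k) => [[V P] ph] /=.
have [_ h] := key k (hphk k) V P ph E.
case/andP: ht => ht1 ht2.
by have /andP[] := h t ht1 (leqW ht2) s.
Qed.
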